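(* Consider the deterministic forward–backward system: find continuous functions $\mu,h:[0,T]\to\mathbb{R}$ such that $$\frac{d\mu_t}{dt}=-w_t^{-2}h_t,\qquad \frac{dh_t}{dt}=0,\qquad t\in[0,T],\qquad \mu_0=0,\qquad h_T=g(\mu_T).$$ This system has exactly three solutions, namely $$(\mu_t,h_t)_{t\in[0,T]}=\Big(-A\int_0^t w_s^{-2}\,ds,\;A\Big)_{t\in[0,T]},\qquad A\in\{-1,0,1\}.$$
   Context: Fix $T>0$, $\kappa\in\mathbb{R}$ and $\delta\in(0,T)$. Let $\eta:[0,T]\to\mathbb{R}$ be the solution of the Riccati equation $\eta_t'=\eta_t^2-2\kappa\eta_t-1$, $\eta_T=1$. Set $w_t=\exp\big(\int_t^T(\eta_s-\kappa)\,ds\big)$ and $r_t=\int_t^T w_s^{-2}\,ds$ for $t\in[0,T]$; note $r_\delta>0$. Define $g:\mathbb{R}\to\mathbb{R}$ by $g(x)=-x/r_\delta$ if $|x|\le r_\delta$ and $g(x)=-\mathrm{sign}(x)$ if $|x|>r_\delta$. *)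

(* Defs.v *)
From Stdlib Require Import Reals Lra ClassicalEpsilon.
Open Scope R_scope.

(* Total Riemann integral: the value of RiemannInt when f is Riemann
   integrable on [a,b] (orientation as in Stdlib), arbitrary otherwise.
   All integrands used below are continuous, hence integrable. *)
Definition Rint (f : R -> R) (a b : R) : R :=
  epsilon (inhabits 0)
    (fun I => exists pr : Riemann_integrable f a b, RiemannInt pr = I).

Definition deriv_within (a b : R) (f : R -> R) (t l : R) : Prop :=
  forall eps, 0 < eps -> exists delta, 0 < delta /\
    forall s, a <= s <= b -> s <> t -> Rabs (s - t) < delta ->
      Rabs ((f s - f t) / (s - t) - l) < eps.

Definition cont_within (a b : R) (f : R -> R) (t : R) : Prop :=
  forall eps, 0 < eps -> exists delta, 0 < delta /\
    forall s, a <= s <= b -> Rabs (s - t) < delta -> Rabs (f s - f t) < eps.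

Definition riccati_sol (T kappa : R) (eta : R -> R) : Prop :=
  (forall t, 0 <= t <= T ->
     deriv_within 0 T eta t (eta t ^ 2 - 2 * kappa * eta t - 1)) /\
  eta T = 1.

Definition wfun (T kappa : R) (eta : R -> R) (t : R) : R :=
  exp (Rint (fun s => eta s - kappa) t T).

Definition rfun (T kappa : R) (eta : R -> R) (t : R) : R :=
  Rint (fun s => / (wfun T kappa eta s) ^ 2) t T.

Definition Rsign (x : R) : R :=
  if Rlt_dec 0 x then 1 else if Rlt_dec x 0 then -1 else 0.

Definition gfun (T kappa delta : R) (eta : R -> R) (x : R) : R :=
  let rd := rfun T kappa eta delta in
  if Rle_dec (Rabs x) rd then - x / rd else - Rsign x.

Definition fb_solution (T kappa delta : R) (eta mu h : R -> R) : Prop :=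
  (forall t, 0 <= t <= T -> cont_within 0 T mu t /\ cont_within 0 T h t) /\
  (forall t, 0 <= t <= T ->
     deriv_within 0 T mu t (- / (wfun T kappa eta t) ^ 2 * h t) /\
     deriv_within 0 T h t 0) /\
  mu 0 = 0 /\
  h T = gfun T kappa delta eta (mu T).

(* Main.v *)
Require Import Defs.
From Stdlib Require Import Reals.
From Stdlib Require Import Lra ClassicalEpsilon.
From Coquelicot Require Import Coquelicot.
Open Scope R_scope.

Lemma exRc (f : R -> R) a b : (forall x, continuous f x) -> ex_RInt f a b.
Proof. intros H; apply (@ex_RInt_continuous R_CompleteNormedModule); auto. Qed.

Lemma Rint_eq (f : R -> R) a b : ex_RInt f a b -> Rint f a b = RInt f a b.
Proof.
  intros H. pose proof (ex_RInt_Reals_0 _ _ _ H) as pr.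
  unfold Rint.
  destruct (epsilon_spec (inhabits 0)
    (fun I => exists pr : Riemann_integrable f a b, RiemannInt pr = I)
    (ex_intro _ (RiemannInt pr) (ex_intro _ pr eq_refl))) as [pr' Hpr'].
  rewrite <- Hpr', (RInt_Reals f a b pr'). reflexivity.
Qed.

Lemma Rint_cont (f g : R -> R) a b : (forall x, continuous g x) ->
  (forall x, Rmin a b <= x <= Rmax a b -> f x = g x) -> Rint f a b = RInt g a b.
Proof.
  intros Hg E.
  assert (Hg' : ex_RInt g a b) by (apply exRc; auto).
  assert (Hf : ex_RInt f a b).
  { apply (ex_RInt_ext g); auto. intros x Hx. symmetry; apply E; lra. }
  rewrite (Rint_eq _ _ _ Hf). apply RInt_ext. intros x Hx. apply E; lra.
Qed.

Definition clamp (T x : R) := Rmax 0 (Rmin T x).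

Lemma clamp_in T x : 0 <= T -> 0 <= clamp T x <= T.
Proof. intros; unfold clamp, Rmax, Rmin; repeat destruct Rle_dec; lra. Qed.

Lemma clamp_id T x : 0 <= x <= T -> clamp T x = x.
Proof. intros; unfold clamp, Rmax, Rmin; repeat destruct Rle_dec; lra. Qed.

Lemma clamp_lip T x y : Rabs (clamp T x - clamp T y) <= Rabs (x - y).
Proof.
  unfold clamp, Rmax, Rmin; repeat destruct Rle_dec; unfold Rabs;
  repeat destruct Rcase_abs; lra.
Qed.

Lemma cont_ext T (f : R -> R) : 0 < T -> (forall t, 0 <= t <= T -> cont_within 0 T f t) ->
  forall x, continuous (fun x => f (clamp T x)) x.
Proof.
  intros HT H x. apply continuity_pt_filterlim.
  unfold continuity_pt, continue_in, limit1_in, limit_in.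
  intros eps Heps.
  destruct (H (clamp T x) (clamp_in T x ltac:(lra)) eps Heps) as [d [Hd Hs]].
  exists d; split; auto. intros y [_ Hy]. simpl in *. unfold R_dist in *.
  apply Hs. apply clamp_in; lra.
  eapply Rle_lt_trans; [apply clamp_lip|exact Hy].
Qed.

Lemma dw_ext a b (f : R -> R) g t l : (forall s, a <= s <= b -> f s = g s) -> a <= t <= b ->
  deriv_within a b g t l -> deriv_within a b f t l.
Proof.
  intros E Ht H eps He. destruct (H eps He) as [d [Hd Hs]].
  exists d; split; auto. intros s H1 H2 H3. rewrite (E s H1), (E t Ht). auto.
Qed.

Lemma dw_l a b (f : R -> R) t l l' : l' = l -> deriv_within a b f t l' -> deriv_within a b f t l.
Proof. intros ->; auto. Qed.

Lemma dw_plus a b (f : R -> R) g t l1 l2 : deriv_within a b f t l1 -> deriv_within a b g t l2 ->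
  deriv_within a b (fun x => f x + g x) t (l1 + l2).
Proof.
  intros H1 H2 eps He.
  destruct (H1 (eps/2) ltac:(lra)) as [d1 [Hd1 Hs1]].
  destruct (H2 (eps/2) ltac:(lra)) as [d2 [Hd2 Hs2]].
  exists (Rmin d1 d2); split. apply Rmin_pos; auto.
  intros s Hs Hst Hsd.
  assert (Hst' : s - t <> 0) by lra.
  replace ((f s + g s - (f t + g t)) / (s - t) - (l1 + l2)) with
    (((f s - f t) / (s - t) - l1) + ((g s - g t) / (s - t) - l2)) by (field; auto).
  eapply Rle_lt_trans; [apply Rabs_triang|].
  assert (Rabs (s - t) < d1) by (eapply Rlt_le_trans; [exact Hsd| apply Rmin_l]).
  assert (Rabs (s - t) < d2) by (eapply Rlt_le_trans; [exact Hsd| apply Rmin_r]).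
  specialize (Hs1 s Hs Hst H). specialize (Hs2 s Hs Hst H0). lra.
Qed.

Lemma dw_scal a b (f : R -> R) t l k : deriv_within a b f t l ->
  deriv_within a b (fun x => k * f x) t (k * l).
Proof.
  intros H eps He.
  assert (Hk : 0 < Rabs k + 1) by (pose proof (Rabs_pos k); lra).
  destruct (H (eps / (Rabs k + 1)) ltac:(apply Rdiv_lt_0_compat; lra)) as [d [Hd Hs]].
  exists d; split; auto. intros s H1 H2 H3.
  assert (Hst' : s - t <> 0) by lra.
  replace ((k * f s - k * f t) / (s - t) - k * l) with
    (k * ((f s - f t) / (s - t) - l)) by (field; auto).
  rewrite Rabs_mult. specialize (Hs s H1 H2 H3).
  pose proof (Rabs_pos ((f s - f t) / (s - t) - l)).
  pose proof (Rabs_pos k).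
  apply Rle_lt_trans with ((Rabs k + 1) * Rabs ((f s - f t) / (s - t) - l)). nra.
  replace eps with ((Rabs k + 1) * (eps / (Rabs k + 1))) by (field; lra).
  apply Rmult_lt_compat_l; lra.
Qed.

Lemma dw_cont a b (f : R -> R) t l : deriv_within a b f t l -> cont_within a b f t.
Proof.
  intros H eps He.
  assert (Hk : 0 < Rabs l + 1) by (pose proof (Rabs_pos l); lra).
  destruct (H 1 ltac:(lra)) as [d [Hd Hs]].
  exists (Rmin d (eps / (Rabs l + 1))); split.
  apply Rmin_pos; auto. apply Rdiv_lt_0_compat; lra.
  intros s H1 H2.
  destruct (Req_dec s t) as [->|Hst]. rewrite Rminus_diag, Rabs_R0; lra.
  assert (Hst' : s - t <> 0) by lra.
  assert (Rabs (s - t) < d) by (eapply Rlt_le_trans; [exact H2| apply Rmin_l]).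
  assert (Hb : Rabs (s - t) < eps / (Rabs l + 1))
    by (eapply Rlt_le_trans; [exact H2| apply Rmin_r]).
  specialize (Hs s H1 Hst H0).
  set (q := (f s - f t) / (s - t)) in *.
  replace (f s - f t) with (q * (s - t)) by (unfold q; field; auto).
  rewrite Rabs_mult.
  assert (Rabs q <= Rabs l + 1).
  { replace q with ((q - l) + l) by ring.
    eapply Rle_trans; [apply Rabs_triang|]. lra. }
  pose proof (Rabs_pos q). pose proof (Rabs_pos (s - t)).
  apply Rle_lt_trans with ((Rabs l + 1) * Rabs (s - t)). nra.
  replace eps with ((Rabs l + 1) * (eps / (Rabs l + 1))) by (field; lra).
  apply Rmult_lt_compat_l; lra.
Qed.

Lemma const_within T (F : R -> R) : 0 < T ->
  (forall t, 0 <= t <= T -> deriv_within 0 T F t 0) ->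
  forall t, 0 <= t <= T -> F t = F 0.
Proof.
  intros HT H.
  pose (Fe := fun x => F (clamp T x)).
  assert (Hlim : forall x, 0 < x < T -> derivable_pt_lim Fe x 0).
  { intros x Hx eps He.
    destruct (H x ltac:(lra) eps He) as [d [Hd Hs]].
    assert (Hp : 0 < Rmin d (Rmin x (T - x))).
    { apply Rmin_pos; auto. apply Rmin_pos; lra. }
    exists (mkposreal _ Hp). intros hh Hh0 Hhh. simpl in Hhh.
    assert (Rabs hh < d) by (eapply Rlt_le_trans; [exact Hhh| apply Rmin_l]).
    assert (Rabs hh < Rmin x (T - x)) by (eapply Rlt_le_trans; [exact Hhh| apply Rmin_r]).
    assert (Rmin x (T - x) <= x) by apply Rmin_l.
    assert (Rmin x (T - x) <= T - x) by apply Rmin_r.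
    apply Rabs_def2 in H1.
    unfold Fe. rewrite (clamp_id T (x + hh)) by lra. rewrite (clamp_id T x) by lra.
    assert (E : x + hh - x = hh) by ring.
    specialize (Hs (x + hh) ltac:(lra) ltac:(lra)). rewrite E in Hs. apply Hs. auto. }
  pose (pr := fun x (P : 0 < x < T) => exist (fun l => derivable_pt_abs Fe x l) 0 (Hlim x P) : derivable_pt Fe x).
  assert (Hc : forall x, 0 <= x <= T -> continuity_pt Fe x).
  { intros x _. apply continuity_pt_filterlim. apply cont_ext; auto.
    intros t Ht. apply (dw_cont _ _ _ _ 0). auto. }
  pose proof (null_derivative_loc Fe 0 T pr Hc (fun x P => eq_refl)) as K.
  intros t Ht. specialize (K t Ht). unfold Fe in K.
  rewrite (clamp_id T t), (clamp_id T 0) in K; lra.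
Qed.

Lemma deriv_prim (ce : R -> R) : (forall x, continuous ce x) ->
  forall t, derivable_pt_lim (fun t => RInt ce 0 t) t (ce t).
Proof.
  intros Hc t. apply is_derive_Reals.
  apply (is_derive_RInt ce (RInt ce 0) 0 t); auto.
  apply filter_forall. intros xx; apply (@RInt_correct R_CompleteNormedModule), exRc; auto.
Qed.

Lemma dw_of_lim T (F G : R -> R) t l : (forall s, 0 <= s <= T -> F s = G s) -> 0 <= t <= T ->
  derivable_pt_lim G t l -> deriv_within 0 T F t l.
Proof.
  intros E Ht H eps He. destruct (H eps He) as [d Hd]. exists d; split; [apply cond_pos|].
  intros s Hs Hst Hsd. rewrite (E s Hs), (E t Ht).
  assert (s - t <> 0) by lra.
  specialize (Hd (s - t) H0 Hsd). replace (t + (s - t)) with s in Hd by ring. exact Hd.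
Qed.

Theorem mainTheorem1 (T kappa delta : R) (eta : R -> R)
  (hT : 0 < T) (hdelta : 0 < delta < T) (heta : riccati_sol T kappa eta) :
  forall mu h : R -> R,
    fb_solution T kappa delta eta mu h <->
    exists A : R, (A = -1 \/ A = 0 \/ A = 1) /\
      forall t, 0 <= t <= T ->
        mu t = - A * Rint (fun s => / (wfun T kappa eta s) ^ 2) 0 t /\
        h t = A.
Proof.
  intros mu h.
  destruct heta as [Hric _].
  pose (e := fun x => eta (clamp T x)).
  assert (Hec : forall x, continuous e x).
  { apply cont_ext; auto. intros t Ht. eapply dw_cont. apply Hric; auto. }
  pose (fe := fun s => e s - kappa).
  assert (Hfe : forall x, continuous fe x).
  { intros x. apply (continuous_minus e (fun _ => kappa)); auto. apply continuous_const. }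
  pose (Ie := fun x => RInt fe x T).
  assert (HIe : forall x, ex_derive Ie x).
  { intros x. eexists. apply (is_derive_RInt' fe Ie x T); auto.
    apply filter_forall. intros xx; apply (@RInt_correct R_CompleteNormedModule), exRc; auto. }
  pose (ce := fun x => / exp (Ie x) ^ 2).
  assert (Hcec : forall x, continuous ce x).
  { intros x. apply (@ex_derive_continuous R_AbsRing R_NormedModule). unfold ce. auto_derive.
    split; auto. split; auto. pose proof (exp_pos (Ie x)). nra. }
  assert (Hcep : forall x, 0 < ce x).
  { intros x. unfold ce. apply Rinv_0_lt_compat, pow_lt, exp_pos. }
  set (c := fun s => / wfun T kappa eta s ^ 2).
  assert (Hc : forall x, 0 <= x <= T -> c x = ce x).
  { intros x Hx. unfold c, ce, wfun, Ie. f_equal. f_equal. f_equal.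
    apply Rint_cont; auto. intros y Hy.
    rewrite Rmin_left in Hy by lra. rewrite Rmax_right in Hy by lra.
    unfold fe, e. rewrite clamp_id by lra. reflexivity. }
  assert (HI : forall a b, 0 <= a <= T -> 0 <= b <= T -> Rint c a b = RInt ce a b).
  { intros a b Ha Hb. apply Rint_cont; auto. intros y Hy. apply Hc.
    unfold Rmin, Rmax in Hy; destruct Rle_dec; lra. }
  assert (Hd : forall t, 0 <= t <= T -> deriv_within 0 T (fun t => Rint c 0 t) t (c t)).
  { intros t Ht. rewrite (Hc t Ht). apply dw_of_lim with (G := fun t => RInt ce 0 t); auto.
    intros; apply HI; lra. apply deriv_prim; auto. }
  assert (Hrd : rfun T kappa eta delta = RInt ce delta T).
  { unfold rfun. apply HI; lra. }
  assert (Hch : RInt ce 0 T = RInt ce 0 delta + RInt ce delta T).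
  { symmetry. apply (RInt_Chasles ce 0 delta T); apply exRc; auto. }
  assert (P1 : 0 < RInt ce 0 delta) by (apply RInt_gt_0; auto; lra).
  assert (P2 : 0 < RInt ce delta T) by (apply RInt_gt_0; auto; lra).
  assert (HI0 : Rint c 0 0 = 0).
  { rewrite HI by lra. rewrite RInt_point. reflexivity. }
  assert (HIT : Rint c 0 T = RInt ce 0 T) by (apply HI; lra).
  set (R0 := RInt ce 0 T) in *. set (Rd := RInt ce delta T) in *.
  split.
  - intros [Hcont [Hder [Hmu0 HhT]]].
    assert (Hh : forall t, 0 <= t <= T -> h t = h T).
    { intros t Ht. rewrite (const_within T h hT) by (auto; intros; apply Hder; auto).
      symmetry. apply (const_within T h hT); auto. intros; apply Hder; auto. lra. }
    set (A := h T) in *.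
    assert (Hmu : forall t, 0 <= t <= T -> mu t = - A * Rint c 0 t).
    { intros t Ht.
      assert (K : mu t + A * Rint c 0 t = mu 0 + A * Rint c 0 0).
      { apply (const_within T (fun t => mu t + A * Rint c 0 t) hT); auto.
        intros s Hs.
        apply dw_l with (- / wfun T kappa eta s ^ 2 * h s + A * c s).
        rewrite Hh by auto. unfold c. ring.
        apply dw_plus. apply Hder; auto. apply dw_scal. apply Hd; auto. }
      rewrite Hmu0, HI0 in K. lra. }
    exists A. split.
    + rewrite Hmu in HhT by lra. rewrite HIT in HhT.
      unfold gfun in HhT. rewrite Hrd in HhT. fold Rd in HhT.
      destruct Rle_dec as [Hle|Hle].
      * right; left.
        assert (A * Rd = A * R0) by (rewrite HhT at 1; field; lra).
        assert (A * RInt ce 0 delta = 0) by (rewrite Hch in H; lra).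
        apply Rmult_integral in H0. destruct H0; lra.
      * unfold Rsign in HhT. repeat destruct Rlt_dec; lra.
    + intros t Ht. split; auto.
  - intros [A [HA Hmh]].
    assert (Hdmu : forall t, 0 <= t <= T ->
      deriv_within 0 T mu t (- / wfun T kappa eta t ^ 2 * h t)).
    { intros t Ht. apply dw_ext with (g := fun t => - A * Rint c 0 t); auto.
      intros; apply Hmh; auto.
      apply dw_l with (- A * c t).
      rewrite (proj2 (Hmh t Ht)). unfold c. ring.
      apply dw_scal. apply Hd; auto. }
    assert (Hdh : forall t, 0 <= t <= T -> deriv_within 0 T h t 0).
    { intros t Ht. apply dw_ext with (g := fun _ => A); auto.
      intros; apply Hmh; auto.
      intros eps He. exists 1. split; [lra|]. intros s _ Hst _.
      replace ((A - A) / (s - t) - 0) with 0 by (field; lra). rewrite Rabs_R0; lra. }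
    split; [|split; [|split]].
    + intros t Ht. split; [eapply dw_cont; apply Hdmu; auto| eapply dw_cont; apply Hdh; auto].
    + intros t Ht; split; auto.
    + rewrite (proj1 (Hmh 0 ltac:(lra))), HI0. ring.
    + rewrite (proj1 (Hmh T ltac:(lra))), (proj2 (Hmh T ltac:(lra))), HIT.
      unfold gfun. rewrite Hrd. fold Rd.
      destruct HA as [->|[->| ->]]; destruct Rle_dec as [Hle|Hle];
        try (unfold Rsign; repeat destruct Rlt_dec);
        try (rewrite Rabs_left in Hle by lra; lra);
        try (rewrite Rabs_right in Hle by lra; lra);
        try (field; lra); try lra.
Qed.
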